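(* Let $n\ge 1$ with $n\not\equiv 1 \pmod 3$, and consider peg solitaire on the triangular board $T_n$. If a sequence of jumps on $T_n$ ends in a board position with exactly one peg, then none of the board positions occurring in this sequence (including the initial one) has $120^\circ$ rotational symmetry, i.e., no such position $P$ satisfies $P(r(h))=P(h)$ for every hole $h$, where $r(x,y)=(y-x,\,n-1-x)$.
   Context: The triangular board $T_n$ is the set of holes with integer skew coordinates $(x,y)$ satisfying $0\le x\le y\le n-1$. A board position $P$ assigns to each hole $h$ either a peg or no peg. A jump takes a peg at hole $p$, jumps it over a peg at an adjacent hole $p+d$ into an empty hole $p+2d$, where $d$ is one of the six directions $(\pm1,0)$, $(0,\pm1)$, $(1,1)$, $(-1,-1)$ and all three holes lie in $T_n$; the jumped-over peg is removed. The map $r(x,y)=(y-x,n-1-x)$ is the counterclockwise rotation of $T_n$ by $120^\circ$ in skew coordinates; a position has $120^\circ$ rotational symmetry if it is invariant under $r$. *)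

(* Defs.v *)
(* holes are integer skew coordinates (x,y) in Z*Z. *)
From Stdlib Require Import ZArith List.
Open Scope Z_scope.

Definition in_board (n : Z) (x y : Z) : Prop := 0 <= x /\ x <= y /\ y <= n - 1.

(* A board position: true = peg, false = no peg.  Only values at holes of
   T_n are meaningful. *)
Definition position := Z -> Z -> bool.

Definition is_dir (dx dy : Z) : Prop :=
  (dx = 1 /\ dy = 0) \/ (dx = -1 /\ dy = 0) \/ (dx = 0 /\ dy = 1) \/
  (dx = 0 /\ dy = -1) \/ (dx = 1 /\ dy = 1) \/ (dx = -1 /\ dy = -1).

Definition jump (n : Z) (P Q : position) : Prop :=
  exists px py dx dy : Z,
    is_dir dx dy /\
    in_board n px py /\ in_board n (px + dx) (py + dy) /\
    in_board n (px + 2 * dx) (py + 2 * dy) /\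
    P px py = true /\ P (px + dx) (py + dy) = true /\
    P (px + 2 * dx) (py + 2 * dy) = false /\
    Q px py = false /\ Q (px + dx) (py + dy) = false /\
    Q (px + 2 * dx) (py + 2 * dy) = true /\
    (forall x y, in_board n x y ->
       (x, y) <> (px, py) -> (x, y) <> (px + dx, py + dy) ->
       (x, y) <> (px + 2 * dx, py + 2 * dy) -> Q x y = P x y).

Fixpoint jump_seq (n : Z) (P : position) (Ps : list position) : Prop :=
  match Ps with
  | nil => True
  | Q :: Qs => jump n P Q /\ jump_seq n Q Qs
  end.

Definition final_pos (P : position) (Ps : list position) : position :=
  last Ps P.

Definition one_peg (n : Z) (P : position) : Prop :=
  exists hx hy, in_board n hx hy /\ P hx hy = true /\
    forall x y, in_board n x y -> P x y = true -> x = hx /\ y = hy.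

Definition rot (n x y : Z) : Z * Z := (y - x, n - 1 - x).

Definition rot_sym (n : Z) (P : position) : Prop :=
  forall x y, in_board n x y -> P (fst (rot n x y)) (snd (rot n x y)) = P x y.

(* Main.v *)
Require Import Defs.
From Stdlib Require Import ZArith List.
From Stdlib Require Import Lia FinFun Permutation Bool.
Open Scope Z_scope.

Definition zsum (L : list (Z*Z)) (f : Z*Z -> Z) : Z :=
  fold_right (fun h acc => f h + acc) 0 L.

Lemma zsum_ext L f g : (forall h, In h L -> f h = g h) -> zsum L f = zsum L g.
Proof.
  induction L as [|a L IH]; simpl; intros H; auto.
  rewrite H by auto. rewrite IH; auto.
Qed.

Lemma zsum_plus L f g : zsum L (fun h => f h + g h) = zsum L f + zsum L g.
Proof. induction L; simpl; lia. Qed.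

Lemma zsum_scale L c f : zsum L (fun h => c * f h) = c * zsum L f.
Proof. induction L; simpl; lia. Qed.

Lemma zsum_perm L L' f : Permutation L L' -> zsum L f = zsum L' f.
Proof. induction 1; simpl; lia. Qed.

Lemma zsum_map L r f : zsum (map r L) f = zsum L (fun h => f (r h)).
Proof. induction L; simpl; lia. Qed.

Definition heq (h a : Z*Z) : bool := Z.eqb (fst h) (fst a) && Z.eqb (snd h) (snd a).
Definition ind (a h : Z*Z) : Z := if heq h a then 1 else 0.

Lemma heq_spec h a : heq h a = true <-> h = a.
Proof.
  destruct h, a; unfold heq; simpl. rewrite andb_true_iff, !Z.eqb_eq.
  split; [intros [-> ->]; auto | intros H; inversion H; auto].
Qed.

Lemma zsum_ind0 a L : ~ In a L -> zsum L (ind a) = 0.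
Proof.
  induction L as [|b L IH]; simpl; intros H; auto.
  unfold ind at 1. destruct (heq b a) eqn:E.
  - apply heq_spec in E. subst; tauto.
  - rewrite IH; auto.
Qed.

Lemma zsum_ind1 a L : NoDup L -> In a L -> zsum L (ind a) = 1.
Proof.
  induction L as [|b L IH]; simpl; intros H1 H2; [tauto|].
  inversion H1; subst.
  unfold ind at 1. destruct (heq b a) eqn:E.
  - apply heq_spec in E. subst. rewrite zsum_ind0; auto.
  - destruct H2 as [H2|H2].
    + subst. assert (heq a a = true) by (apply heq_spec; auto). congruence.
    + rewrite IH; auto.
Qed.

Definition R (n : Z) : list Z := map Z.of_nat (seq 0 (Z.to_nat n)).

Lemma R_in n z : In z (R n) <-> 0 <= z < n.
Proof.
  unfold R. rewrite in_map_iff. split.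
  - intros [m [<- Hm]]. apply in_seq in Hm. lia.
  - intros H. exists (Z.to_nat z). split; [lia|]. apply in_seq. lia.
Qed.

Lemma R_nodup n : NoDup (R n).
Proof.
  unfold R. apply Injective_map_NoDup. intros a b; lia. apply seq_NoDup.
Qed.

Lemma nodup_prod (A B : Type) (l : list A) (l' : list B) :
  NoDup l -> NoDup l' -> NoDup (list_prod l l').
Proof.
  induction l as [|a l IH]; simpl; intros H1 H2. constructor.
  inversion H1; subst. apply NoDup_app.
  - apply Injective_map_NoDup; auto. intros x y E; inversion E; auto.
  - auto.
  - intros [x y] Hx Hy. apply in_map_iff in Hx. destruct Hx as [z [E _]].
    inversion E; subst. apply in_prod_iff in Hy. tauto.
Qed.

Definition inb (n : Z) (h : Z*Z) : bool :=
  (0 <=? fst h) && (fst h <=? snd h) && (snd h <=? n-1).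

Definition L (n : Z) : list (Z*Z) := filter (inb n) (list_prod (R n) (R n)).

Lemma L_in n x y : In (x,y) (L n) <-> in_board n x y.
Proof.
  unfold L, in_board. rewrite filter_In, in_prod_iff, !R_in. unfold inb; simpl.
  rewrite !andb_true_iff, !Z.leb_le. lia.
Qed.

Lemma L_nodup n : NoDup (L n).
Proof. apply NoDup_filter, nodup_prod; apply R_nodup. Qed.

Definition g (P : position) (k : Z) (h : Z*Z) : Z :=
  if P (fst h) (snd h) && Z.eqb ((fst h + snd h) mod 3) k then 1 else 0.

Definition N n P k := zsum (L n) (g P k).

Definition cc (h : Z*Z) (k : Z) : Z := if Z.eqb ((fst h + snd h) mod 3) k then 1 else 0.

Lemma jump_change n P Q k : jump n P Q -> 0 <= k < 3 ->
  N n Q k - N n P k = 1 \/ N n Q k - N n P k = -1.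
Proof.
  intros [px [py [dx [dy [Hd [B0 [B1 [B2 [P0 [P1 [P2 [Q0 [Q1 [Q2 Hrest]]]]]]]]]]]]]] Hk.
  assert (Hnz : dx <> 0 \/ dy <> 0) by (unfold is_dir in Hd; lia).
  set (a0 := (px,py)). set (a1 := (px+dx,py+dy)). set (a2 := (px+2*dx,py+2*dy)).
  assert (D01 : a0 <> a1) by (unfold a0, a1; intro EE; pose proof (f_equal fst EE); pose proof (f_equal snd EE); cbn [fst snd] in *; lia).
  assert (D02 : a0 <> a2) by (unfold a0, a2; intro EE; pose proof (f_equal fst EE); pose proof (f_equal snd EE); cbn [fst snd] in *; lia).
  assert (D12 : a1 <> a2) by (unfold a1, a2; intro EE; pose proof (f_equal fst EE); pose proof (f_equal snd EE); cbn [fst snd] in *; lia).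
  assert (E : N n Q k = zsum (L n) (fun h => g P k h + (cc a2 k * ind a2 h +
     ((- cc a0 k) * ind a0 h + (- cc a1 k) * ind a1 h)))).
  { unfold N. apply zsum_ext. intros h Hh.
    unfold g, cc, ind.
    destruct (heq h a0) eqn:E0, (heq h a1) eqn:E1, (heq h a2) eqn:E2;
    try apply heq_spec in E0; try apply heq_spec in E1; try apply heq_spec in E2; try congruence.
    - subst h. unfold a0, a1, a2; cbn [fst snd]. rewrite ?P0, ?P1, ?P2, ?Q0, ?Q1, ?Q2.
      repeat match goal with |- context [Z.eqb ?a ?b] => destruct (Z.eqb a b) end; cbn [andb]; lia.
    - subst h. unfold a0, a1, a2; cbn [fst snd]. rewrite ?P0, ?P1, ?P2, ?Q0, ?Q1, ?Q2.
      repeat match goal with |- context [Z.eqb ?a ?b] => destruct (Z.eqb a b) end; cbn [andb]; lia.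
    - subst h. unfold a0, a1, a2; cbn [fst snd]. rewrite ?P0, ?P1, ?P2, ?Q0, ?Q1, ?Q2.
      repeat match goal with |- context [Z.eqb ?a ?b] => destruct (Z.eqb a b) end; cbn [andb]; lia.
    - destruct h as [x y]. apply L_in in Hh. cbn [fst snd].
      rewrite Hrest; auto.
      + lia.
      + intro EE. apply heq_spec in EE. fold a0 in EE. congruence.
      + intro EE. apply heq_spec in EE. fold a1 in EE. congruence.
      + intro EE. apply heq_spec in EE. fold a2 in EE. congruence. }
  rewrite E, !zsum_plus, !zsum_scale.
  rewrite !zsum_ind1; try apply L_nodup; try (apply L_in; auto).
  fold (N n P k).
  unfold cc, a0, a1, a2; simpl.
  unfold is_dir in Hd.
  destruct Hd as [[-> ->]|[[-> ->]|[[-> ->]|[[-> ->]|[[-> ->]|[-> ->]]]]]];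
  repeat match goal with |- context [Z.eqb ?a ?b] => destruct (Z.eqb_spec a b) end;
  Z.to_euclidean_division_equations; lia.
Qed.

Lemma final_count n F : one_peg n F ->
  exists hx hy, forall k, N n F k = cc (hx,hy) k.
Proof.
  intros [hx [hy [Hb [Ht Hu]]]]. exists hx, hy. intros k.
  unfold N. rewrite (zsum_ext _ _ (fun h => cc (hx,hy) k * ind (hx,hy) h)).
  - rewrite zsum_scale, zsum_ind1; [lia | apply L_nodup | apply L_in; auto].
  - intros [x y] Hh. apply L_in in Hh. unfold g, cc, ind. cbn [fst snd].
    destruct (heq (x,y) (hx,hy)) eqn:E.
    + apply heq_spec in E. injection E; intros; subst. rewrite Ht.
      destruct (Z.eqb _ _); cbn [andb]; lia.
    + destruct (F x y) eqn:Fx.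
      * destruct (Hu x y Hh Fx); subst.
        assert (heq (hx,hy) (hx,hy) = true) by (apply heq_spec; auto). congruence.
      * cbn [andb]. lia.
Qed.

Definition rotp n (h : Z*Z) := rot n (fst h) (snd h).

Lemma rot_perm n : Permutation (L n) (map (rotp n) (L n)).
Proof.
  apply NoDup_Permutation.
  - apply L_nodup.
  - apply Injective_map_NoDup; [|apply L_nodup].
    intros [x y] [x' y']; unfold rotp, rot; cbn [fst snd]. intros E.
    pose proof (f_equal fst E); pose proof (f_equal snd E); cbn [fst snd] in *.
    f_equal; lia.
  - intros [x y]. rewrite in_map_iff. split.
    + intros H. exists (rotp n (rotp n (x,y))). unfold rotp, rot; cbn [fst snd].
      apply L_in in H. split.
      * f_equal; lia.
      * apply L_in. unfold in_board in *. lia.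
    + intros [[a b] [E H]]. unfold rotp, rot in E; cbn [fst snd] in E.
      injection E; intros; subst. apply L_in in H. apply L_in. unfold in_board in *. lia.
Qed.

Lemma sym_count n P k : rot_sym n P -> 0 <= k < 3 ->
  N n P ((k + n - 1) mod 3) = N n P k.
Proof.
  intros Hs Hk. unfold N.
  rewrite (zsum_perm _ _ _ (rot_perm n)), zsum_map.
  apply zsum_ext. intros [x y] Hh. apply L_in in Hh.
  unfold g, rotp. pose proof (Hs x y Hh) as E. unfold rot in *. cbn [fst snd] in *. rewrite E.
  destruct (P x y); cbn [andb]; auto.
  repeat match goal with |- context [Z.eqb ?a ?b] => destruct (Z.eqb_spec a b) end;
  auto; exfalso; Z.to_euclidean_division_equations; lia.
Qed.

Lemma last_irrel (Rs : list position) (A B : position) :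
  Rs <> nil -> last Rs A = last Rs B.
Proof.
  induction Rs as [|a Rs IH]; intros H; [congruence|].
  destruct Rs; simpl; auto.
  simpl in IH. apply IH. discriminate.
Qed.

Lemma seq_inv n P Ps : jump_seq n P Ps -> forall Q, In Q (P :: Ps) ->
  let F := final_pos P Ps in
  (N n Q 0 - N n Q 1 - (N n F 0 - N n F 1)) mod 2 = 0 /\
  (N n Q 1 - N n Q 2 - (N n F 1 - N n F 2)) mod 2 = 0.
Proof.
  revert P. induction Ps as [|R0 Rs IH]; intros P Hj Q HQ F.
  - destruct HQ as [<-|[]]. unfold F, final_pos; simpl.
    rewrite !Z.sub_diag. auto.
  - destruct Hj as [Hj Hjs].
    assert (EF : F = final_pos R0 Rs).
    { unfold F, final_pos. destruct Rs as [|p Rs]; [reflexivity|].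
      change (last (p :: Rs) P = last (p :: Rs) R0).
      apply last_irrel. discriminate. }
    rewrite EF.
    destruct HQ as [<-|HQ].
    + destruct (IH R0 Hjs R0 (or_introl eq_refl)) as [I1 I2].
      pose proof (jump_change n P R0 0 Hj ltac:(lia)).
      pose proof (jump_change n P R0 1 Hj ltac:(lia)).
      pose proof (jump_change n P R0 2 Hj ltac:(lia)).
      split; Z.to_euclidean_division_equations; lia.
    + apply IH; auto.
Qed.

Theorem theorem2p3 (n : Z) (P0 : position) (Ps : list position) :
  1 <= n -> n mod 3 <> 1 ->
  jump_seq n P0 Ps ->
  one_peg n (final_pos P0 Ps) ->
  forall P, In P (P0 :: Ps) -> ~ rot_sym n P.
Proof.
  intros Hn Hm Hj H1 P HP Hs.
  destruct (seq_inv n P0 Ps Hj P HP) as [I1 I2].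
  destruct (final_count n _ H1) as [hx [hy Hc]].
  rewrite !Hc in I1, I2. unfold cc in I1, I2; cbn [fst snd] in I1, I2.
  pose proof (sym_count n P 0 Hs) as S0.
  pose proof (sym_count n P 1 Hs) as S1.
  pose proof (sym_count n P 2 Hs) as S2.
  assert (Hc3 : n mod 3 = 0 \/ n mod 3 = 2) by (Z.to_euclidean_division_equations; lia).
  destruct Hc3 as [Hc3|Hc3].
  - replace ((0 + n - 1) mod 3) with 2 in S0 by (Z.to_euclidean_division_equations; lia).
    replace ((1 + n - 1) mod 3) with 0 in S1 by (Z.to_euclidean_division_equations; lia).
    specialize (S0 ltac:(lia)). specialize (S1 ltac:(lia)).
    repeat match goal with H : context [Z.eqb ?a ?b] |- _ => destruct (Z.eqb_spec a b) end;
    Z.to_euclidean_division_equations; lia.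
  - replace ((0 + n - 1) mod 3) with 1 in S0 by (Z.to_euclidean_division_equations; lia).
    replace ((1 + n - 1) mod 3) with 2 in S1 by (Z.to_euclidean_division_equations; lia).
    specialize (S0 ltac:(lia)). specialize (S1 ltac:(lia)).
    repeat match goal with H : context [Z.eqb ?a ?b] |- _ => destruct (Z.eqb_spec a b) end;
    Z.to_euclidean_division_equations; lia.
Qed.
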